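(* Let $s$ be a positive integer with $s\equiv 2\pmod 3$. Then $s(3s-1)\neq (mk^{2}-(m-2)k)p$ for all positive integers $m,k$ with $m\not\equiv 0\pmod 3$ and all primes $p\equiv 1\pmod 3$. *)

(* Defs.v *)
From mathcomp Require Import all_boot all_order all_algebra.

(* Main.v *)
Require Import Defs.
From mathcomp Require Import all_boot all_order all_algebra.
From mathcomp Require Import zify ring.
Import GRing.Theory Num.Theory.
Local Open Scope ring_scope.

Lemma natpart (s m k p : nat) : (0 < s)%N -> (0 < k)%N ->
  (s%:Z * (3 * s%:Z - 1)) = ((m%:Z * k%:Z ^+ 2 - (m%:Z - 2) * k%:Z) * p%:Z) ->
  (s * (3 * s - 1) = k * (m * (k - 1) + 2) * p)%N.
Proof.
move=> s0 k0 H; apply/eqP; rewrite -(eqr_nat int) !natrM.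
rewrite natrB ?natrD ?natrM ?natrB //; last by rewrite muln_gt0.
apply/eqP; transitivity (s%:Z * (3 * s%:Z - 1)); first by rewrite !natz; ring.
rewrite H !natz; ring.
Qed.

Theorem lemma2p4 (s : nat) :
  (0 < s)%N -> (s %% 3 = 2)%N ->
  forall (m k p : nat), (0 < m)%N -> (0 < k)%N -> (m %% 3 != 0)%N ->
    prime p -> (p %% 3 = 1)%N ->
    (s%:Z * (3 * s%:Z - 1)) !=
      ((m%:Z * k%:Z ^+ 2 - (m%:Z - 2) * k%:Z) * p%:Z).
Proof.
move=> s0 s3 m k p m0 k0 m3 _ p3; apply/negP => /eqP H.
have := natpart _ _ _ _ s0 k0 H => {H} /(congr1 (modn^~ 3%N)) /=.
have e1 : ((3 * s - 1) %% 3 = 2)%N.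
  have -> : (3 * s - 1 = (s - 1) * 3 + 2)%N by lia.
  by rewrite modnMDl.
have ek : ((k - 1) %% 3 = ((k %% 3) + 2) %% 3)%N.
  by rewrite modnDml -(modnDr (k-1) 3); congr modn; lia.
have eR : ((k * (m * (k - 1) + 2) * p) %% 3 =
   ((k %% 3) * (((m %% 3) * ((k %% 3 + 2) %% 3)) %% 3 + 2) %% 3) %% 3)%N.
  rewrite -modnMm p3 muln1 modn_mod -modnMm -(modnDml (m * (k-1))) -modnMm !modn_mod -(modnMm m (k-1)) ek.
  by rewrite modnMmr.
rewrite eR -modnMm e1 s3.
move: m3 (ltn_pmod m (isT : (0 < 3)%N)) (ltn_pmod k (isT : (0 < 3)%N)).
case: (m %% 3)%N => [|[|[|r]]] //= _ _; case: (k %% 3)%N => [|[|[|t]]] //.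
Qed.
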